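(* Let $E$ be a Banach space and $P$ a metric space. For $\mu\in P$ and $\lambda>0$ let $\{R^{(\mu,\lambda)}(t,s)\}_{t\geq s\geq0}$ be evolution systems on $E$ such that (H4) there are $M\geq1$, $\omega\in\mathbb{R}$ with $\|R^{(\mu,\lambda)}(t,s)\|\leq Me^{\omega(t-s)}$ for all $\mu,\lambda$ and $0\leq s\leq t$; and (H5) there are $C_0$ semigroups $\{\widehat S^{(\mu)}(t)\}_{t\geq0}$, $\mu\in P$, on $E$ such that for any $t\geq0$, $s\in[0,t]$, $\mu\in P$, $\bar u\in E$, $\lim_{\lambda\to0^+,\ \bar v\to\bar u,\ \nu\to\mu}R^{(\nu,\lambda)}(t,s)\bar v=\widehat S^{(\mu)}(t-s)\bar u$, uniformly for $t,s$ from bounded intervals. Let $(T_n)$ in $(0,+\infty)$, $(k_n)$ positive integers, $(\lambda_n)$ in $(0,+\infty)$, $(\mu_n)$ in $P$ be such that $T_n\to+\infty$, $k_n\to\infty$, $\lambda_n\to0$, $k_n\lambda_nT_n\to t$ for some $t>0$, $\mu_n\to\mu_0\in P$, and $k_n\lambda_nT_n\leq t$ for almost all $n$. Then for any continuous $w:[0,t]\to E$, $\lambda_nT_n\sum_{k=0}^{k_n-1}R^{(\mu_n,\lambda_n)}(k_n\lambda_nT_n,k\lambda_nT_n)w(k\lambda_nT_n)\to\int_0^t\widehat S^{(\mu_0)}(t-s)w(s)\,ds$ as $n\to+\infty$.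
   Context: An evolution system on $E$ is a family $\{R(t,s)\}_{t\geq s\geq 0}$ of bounded linear operators with $R(t,t)=I$, $R(t,s)R(s,r)=R(t,r)$ for $t\geq s\geq r\geq 0$, and $(s,t)\mapsto R(t,s)\bar u$ continuous for each $\bar u\in E$. *)

(* Defs.v *)
From Stdlib Require Import Reals Lra.
From Coquelicot Require Import Coquelicot.
Open Scope R_scope.

Definition is_metric {P : Type} (d : P -> P -> R) : Prop :=
  (forall x y, 0 <= d x y) /\
  (forall x y, d x y = 0 <-> x = y) /\
  (forall x y, d x y = d y x) /\
  (forall x y z, d x z <= d x y + d y z).

Section Ops.
Context {E : NormedModule R_AbsRing}.

Definition bounded_linear (A : E -> E) : Prop :=
  (forall x y, A (plus x y) = plus (A x) (A y)) /\
  (forall (a : R) x, A (scal a x) = scal a (A x)) /\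
  (exists C : R, forall x, norm (A x) <= C * norm x).

Definition is_evolution_system (Rf : R -> R -> E -> E) : Prop :=
  (forall t s, 0 <= s <= t -> bounded_linear (Rf t s)) /\
  (forall t, 0 <= t -> forall u, Rf t t u = u) /\
  (forall t s r, 0 <= r <= s -> s <= t -> forall u, Rf t s (Rf s r u) = Rf t r u) /\
  (forall u t s, 0 <= s <= t -> forall eps, 0 < eps -> exists delta, 0 < delta /\
     forall t' s', 0 <= s' <= t' -> Rabs (t' - t) < delta -> Rabs (s' - s) < delta ->
       norm (minus (Rf t' s' u) (Rf t s u)) < eps).

Definition is_C0_semigroup (S : R -> E -> E) : Prop :=
  (forall t, 0 <= t -> bounded_linear (S t)) /\
  (forall u, S 0 u = u) /\
  (forall t s, 0 <= t -> 0 <= s -> forall u, S (t + s) u = S t (S s u)) /\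
  (forall u eps, 0 < eps -> exists delta, 0 < delta /\
     forall h, 0 <= h < delta -> norm (minus (S h u) u) < eps).

Definition continuous_on_Icc (w : R -> E) (a b : R) : Prop :=
  forall s, a <= s <= b -> forall eps, 0 < eps -> exists delta, 0 < delta /\
    forall s', a <= s' <= b -> Rabs (s' - s) < delta -> norm (minus (w s') (w s)) < eps.
End Ops.

(* Main.v *)
Require Import Defs.
From Stdlib Require Import Reals Lra Lia Classical ClassicalEpsilon.
From Coquelicot Require Import Coquelicot.
Open Scope R_scope.

Lemma minus_pp_G {G : AbelianGroup} (a b c d : G) : minus (plus a b) (plus c d) = plus (minus a c) (minus b d).
Proof.
  unfold minus. rewrite opp_plus.
  rewrite <- !plus_assoc. f_equal. rewrite !plus_assoc. f_equal. apply plus_comm.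
Qed.

Lemma minus_plus_G {G : AbelianGroup} (a b : G) : minus a (plus a b) = opp b.
Proof. unfold minus. rewrite opp_plus, plus_assoc. transitivity (plus zero (opp b)). f_equal. apply plus_opp_r. apply plus_zero_l. Qed.

Section G.
Context {E : NormedModule R_AbsRing}.

Lemma nm_tri (a b c : E) : norm (minus a c) <= norm (minus a b) + norm (minus b c).
Proof. rewrite (minus_trans b). apply norm_triangle. Qed.

Lemma nm_sym (a b : E) : norm (minus a b) = norm (minus b a).
Proof. rewrite <- opp_minus. apply norm_opp. Qed.

Lemma minus_pp (a b c d : E) : minus (plus a b) (plus c d) = plus (minus a c) (minus b d).
Proof. exact (@minus_pp_G (NormedModule.AbelianGroup R_AbsRing E) a b c d). Qed.

Lemma nm_pp (a b c d : E) : norm (minus (plus a b) (plus c d)) <= norm (minus a c) + norm (minus b d).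
Proof. rewrite minus_pp. apply norm_triangle. Qed.

Lemma sum_diff (a b : nat -> E) (m : nat) :
  norm (minus (sum_n a m) (sum_n b m)) <= sum_n (fun j => norm (minus (a j) (b j))) m.
Proof.
  induction m.
  - rewrite !sum_O. lra.
  - rewrite !sum_Sn. eapply Rle_trans. apply nm_pp. simpl. change (plus ?x ?y) with (x + y). lra.
Qed.

Lemma step_lemma (A B X Y : E) (h : R) :
  norm (minus (plus A B) (scal h (plus X Y))) <= norm (minus A (scal h X)) + norm (minus B (scal h Y)).
Proof. assert (Hd: scal h (plus X Y) = plus (scal h X) (scal h Y)) by exact (@scal_distr_l R_Ring (NormedModule.ModuleSpace R_AbsRing E) h X Y). rewrite Hd. apply nm_pp. Qed.

Lemma nm_inv (x y : E) : norm y <= norm x + norm (minus x y).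
Proof. pose proof (norm_triangle_inv x y). apply Rabs_le_between in H. lra. Qed.
Lemma nm_inv2 (x y : E) : norm x <= norm y + norm (minus x y).
Proof. pose proof (norm_triangle_inv x y). apply Rabs_le_between in H. lra. Qed.
Lemma nm_zero (x : E) : norm (minus x x) = 0.
Proof. rewrite minus_eq_zero. apply norm_zero. Qed.
Lemma nm_minus_plus (a b : E) : norm (minus a (plus a b)) = norm b.
Proof.
  assert (He : minus a (plus a b) = opp b).
  { exact (@minus_plus_G (NormedModule.AbelianGroup R_AbsRing E) a b). }
  rewrite He. apply norm_opp.
Qed.

Lemma nm_scal_pos (h : R) (x : E) : 0 <= h -> norm (scal h x) <= h * norm x.
Proof. intros H. eapply Rle_trans. exact (@norm_scal R_AbsRing E h x). unfold abs; simpl. rewrite Rabs_pos_eq; lra. Qed.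
End G.

Lemma sumR_bound (g : nat -> R) (c : R) (m : nat) :
  (forall j, (j <= m)%nat -> g j <= c) -> sum_n g m <= INR (S m) * c.
Proof.
  induction m; intros H.
  - rewrite sum_O. simpl. specialize (H 0%nat (le_n _)). lra.
  - rewrite sum_Sn. change (plus ?x ?y) with (x + y). rewrite S_INR.
    assert (sum_n g m <= INR (S m) * c) by (apply IHm; intros; apply H; lia).
    specialize (H (S m) (le_n _)). rewrite S_INR in *. lra.
Qed.

Lemma cover (a b : R) (Q : R -> R -> Prop) :
  (forall y, a <= y <= b -> exists d, 0 < d /\ Q y d) ->
  exists d, 0 < d /\ forall x, a <= x <= b ->
    exists y dl, a <= y <= b /\ Q y dl /\ Rabs (x - y) < dl /\ d <= dl.
Proof.
  intros H.
  assert (H' : forall y, exists d : posreal, a <= y <= b -> Q y d).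
  { intros y. destruct (classic (a <= y <= b)) as [Hy|Hy].
    - destruct (H y Hy) as [d [Hd Qd]]. exists (mkposreal d Hd). intros _. exact Qd.
    - exists (mkposreal 1 Rlt_0_1). intros Hy'. contradiction. }
  set (D := fun y => proj1_sig (constructive_indefinite_description _ (H' y))).
  destruct (compactness_value_1d a b D) as [d Hd].
  exists d. split. apply cond_pos. intros x Hx.
  apply NNPP. intros Hn. apply (Hd x Hx). intros [y [Hy [H1 H2]]].
  apply Hn. exists y, (D y). split; [exact Hy|]. split; [|split; assumption].
  unfold D. destruct (constructive_indefinite_description _ (H' y)) as [dd Hdd]. simpl.
  apply Hdd. exact Hy.
Qed.

Section C.
Context {E : CompleteNormedModule R_AbsRing}.

Lemma uc_cont (F : R -> E) :
  (forall eps, 0 < eps -> exists d, 0 < d /\ forall x y, Rabs (x - y) < d -> norm (minus (F x) (F y)) < eps) ->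
  forall z, continuous F z.
Proof.
  intros H z. unfold continuous. apply filterlim_locally. intros eps.
  destruct (H eps (cond_pos eps)) as [d [Hd Hu]].
  exists (mkposreal d Hd). intros y Hy. apply (@norm_compat1 R_AbsRing E). apply Hu. exact Hy.
Qed.

Lemma piece (F : R -> E) (h eps : R) : 0 < h -> (forall z, continuous F z) ->
  (forall x y, Rabs (x - y) <= h -> norm (minus (F x) (F y)) <= eps) ->
  forall a, norm (minus (RInt F a (a + h)) (scal h (F a))) <= h * eps.
Proof.
  intros Hh Hc Hu a.
  assert (Hex : ex_RInt F a (a + h)).
  { apply ex_RInt_continuous. intros; apply Hc. }
  replace (scal h (F a)) with (RInt (fun _ => F a) a (a + h)).
  2:{ rewrite RInt_const. f_equal. ring. }
  rewrite <- RInt_minus; [| exact Hex | apply ex_RInt_const].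
  replace (h * eps) with ((a + h - a) * eps) by ring.
  apply norm_RInt_le_const with (f := fun x => minus (F x) (F a)). lra.
  intros x Hx. apply Hu. rewrite Rabs_pos_eq; lra.
  apply RInt_correct. apply ex_RInt_minus. exact Hex. apply ex_RInt_const.
Qed.

Lemma riemann (F : R -> E) (h eps : R) : 0 < h -> (forall z, continuous F z) ->
  (forall x y, Rabs (x - y) <= h -> norm (minus (F x) (F y)) <= eps) ->
  forall m, norm (minus (RInt F 0 (INR (S m) * h)) (scal h (sum_n (fun j => F (INR j * h)) m)))
     <= INR (S m) * h * eps.
Proof.
  intros Hh Hc Hu m. induction m.
  - rewrite sum_O. replace (INR 1 * h) with (0 + h) by (simpl; ring).
    replace (INR 0 * h) with 0 by (simpl; ring).
    eapply Rle_trans. apply (piece F h eps Hh Hc Hu 0). simpl; lra.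
  - rewrite sum_Sn.
    replace (INR (S (S m)) * h) with (INR (S m) * h + h) by (rewrite (S_INR (S m)); ring).
    rewrite <- (RInt_Chasles F 0 (INR (S m) * h)); try (apply ex_RInt_continuous; intros; apply Hc).
    pose proof (@step_lemma (CompleteNormedModule.NormedModule R_AbsRing E)
      (RInt F 0 (INR (S m) * h)) (RInt F (INR (S m) * h) (INR (S m) * h + h))
      (sum_n (fun j : nat => F (INR j * h)) m) (F (INR (S m) * h)) h) as HS.
    refine (Rle_trans _ _ _ HS _).
    pose proof (piece F h eps Hh Hc Hu (INR (S m) * h)).
    eapply Rle_trans; [apply Rplus_le_compat; [exact IHm | exact H] |]. lra.
Qed.
End C.

Section W.
Context {E : CompleteNormedModule R_AbsRing}.
Let N := CompleteNormedModule.NormedModule R_AbsRing E.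

Lemma c_tri (a b c : E) : norm (minus a c) <= norm (minus a b) + norm (minus b c).
Proof. exact (@nm_tri N a b c). Qed.
Lemma c_sym (a b : E) : norm (minus a b) = norm (minus b a).
Proof. exact (@nm_sym N a b). Qed.
Lemma c_diff (a b : nat -> E) (m : nat) :
  norm (minus (sum_n a m) (sum_n b m)) <= sum_n (fun j => norm (minus (a j) (b j))) m.
Proof. exact (@sum_diff N a b m). Qed.
Lemma c_inv (x y : E) : norm y <= norm x + norm (minus x y).
Proof. exact (@nm_inv N x y). Qed.
Lemma c_inv2 (x y : E) : norm x <= norm y + norm (minus x y).
Proof. exact (@nm_inv2 N x y). Qed.
Lemma c_zero (x : E) : norm (minus x x) = 0.
Proof. exact (@nm_zero N x). Qed.
Lemma c_scal_diff (h : R) (x y : E) : 0 <= h -> norm (minus (scal h x) (scal h y)) <= h * norm (minus x y).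
Proof.
  intros Hh. assert (He : minus (scal h x) (scal h y) = scal h (minus x y)).
  { symmetry. exact (@scal_minus_distr_l R_Ring (NormedModule.ModuleSpace R_AbsRing N) h x y). }
  rewrite He. exact (@nm_scal_pos N h (minus x y) Hh).
Qed.
Lemma c_minus_plus (a b : E) : norm (minus a (plus a b)) = norm b.
Proof. exact (@nm_minus_plus N a b). Qed.
Lemma c_lin (A : E -> E) : bounded_linear A -> forall x y, A (minus x y) = minus (A x) (A y).
Proof.
  intros [Hp [Hs _]] x y. unfold minus.
  rewrite Hp. f_equal.
  pose proof (@scal_opp_one R_Ring (NormedModule.ModuleSpace R_AbsRing N) y) as E1.
  pose proof (@scal_opp_one R_Ring (NormedModule.ModuleSpace R_AbsRing N) (A y)) as E2.
  pose proof (Hs (opp one) y) as E3.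
  exact (eq_trans (f_equal A (eq_sym E1)) (eq_trans E3 E2)).
Qed.
End W.

Definition clamp (t x : R) := Rmax 0 (Rmin x t).
Lemma clamp_in t x : 0 <= t -> 0 <= clamp t x <= t.
Proof. intros. unfold clamp, Rmax, Rmin. repeat destruct Rle_dec; lra. Qed.
Lemma clamp_id t x : 0 <= x <= t -> clamp t x = x.
Proof. intros. unfold clamp, Rmax, Rmin. repeat destruct Rle_dec; lra. Qed.
Lemma clamp_lip t x y : 0 <= t -> Rabs (clamp t x - clamp t y) <= Rabs (x - y).
Proof. intros. unfold clamp, Rmax, Rmin. repeat destruct Rle_dec; split_Rabs; lra. Qed.
Lemma exp_le x y : x <= y -> exp x <= exp y.
Proof. intros [H|H]. left; apply exp_increasing; exact H. subst; lra. Qed.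

Theorem lemma2p5
  (E : CompleteNormedModule R_AbsRing)
  (P : Type) (d : P -> P -> R) (Hd : is_metric d)
  (Rfam : P -> R -> R -> R -> E -> E)   (* Rfam mu lambda t s = R^{(mu,lambda)}(t,s) *)
  (Shat : P -> R -> E -> E)             (* Shat mu t = \hat S^{(mu)}(t) *)
  (Hevol : forall mu lam, 0 < lam -> is_evolution_system (Rfam mu lam))
  (H4 : exists (M omega : R), 1 <= M /\
     forall mu lam, 0 < lam -> forall t s, 0 <= s <= t -> forall x : E,
       norm (Rfam mu lam t s x) <= M * exp (omega * (t - s)) * norm x)
  (HC0 : forall mu, is_C0_semigroup (Shat mu))
  (H5 : forall (Tb : R) (mu : P) (u : E) (eps : R), 0 < eps ->
     exists delta, 0 < delta /\
       forall (lam : R) (v : E) (nu : P), 0 < lam < delta ->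
         norm (minus v u) < delta -> d nu mu < delta ->
         forall t s, 0 <= s <= t -> t <= Tb ->
           norm (minus (Rfam nu lam t s v) (Shat mu (t - s) u)) < eps)
  (T : nat -> R) (k : nat -> nat) (lam : nat -> R) (mu : nat -> P) (mu0 : P) (t : R)
  (HT : forall n, 0 < T n) (Hk : forall n, (1 <= k n)%nat) (Hlam : forall n, 0 < lam n)
  (Ht : 0 < t)
  (HTlim : is_lim_seq T p_infty)
  (Hklim : is_lim_seq (fun n => INR (k n)) p_infty)
  (Hlamlim : is_lim_seq lam 0)
  (Hprod : is_lim_seq (fun n => INR (k n) * lam n * T n) t)
  (Hmu : is_lim_seq (fun n => d (mu n) mu0) 0)
  (Hle : exists N, forall n, (N <= n)%nat -> INR (k n) * lam n * T n <= t)
  (w : R -> E) (Hw : continuous_on_Icc w 0 t) :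
  filterlim
    (fun n => scal (lam n * T n)
       (sum_n (fun j => Rfam (mu n) (lam n) (INR (k n) * lam n * T n) (INR j * lam n * T n)
                          (w (INR j * lam n * T n)))
              (k n - 1)%nat))
    eventually
    (locally (RInt (fun s => Shat mu0 (t - s) (w s)) 0 t)).
Proof.
  destruct H4 as [M [om [HM H4']]].
  destruct Hd as [_ [Hd0 _]].
  assert (dself : d mu0 mu0 = 0) by (apply Hd0; reflexivity).
  set (K := M * exp (Rabs om * t)).
  assert (HK : 1 <= K).
  { unfold K. pose proof (exp_ineq1_le (Rabs om * t)).
    assert (0 <= Rabs om * t) by (apply Rmult_le_pos; [apply Rabs_pos | lra]). nra. }
  destruct (HC0 mu0) as [Hlin [H0 [Hsg Hsc]]].
  assert (Sb : forall tau, 0 <= tau <= t -> forall u, norm (Shat mu0 tau u) <= K * norm u).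
  { intros tau Htau u. apply Rle_plus_epsilon. intros e He.
    destruct (H5 tau mu0 u e He) as [de [Hde H5']].
    assert (Hl : 0 < de / 2 < de) by lra.
    specialize (H5' (de/2) u mu0 Hl). rewrite c_zero, dself in H5'.
    specialize (H5' Hde Hde tau 0 ltac:(lra) ltac:(lra)).
    specialize (H4' mu0 (de/2) ltac:(lra) tau 0 ltac:(lra) u).
    rewrite Rminus_0_r in H5', H4'.
    pose proof (c_inv (Rfam mu0 (de/2) tau 0 u) (Shat mu0 tau u)).
    assert (exp (om * tau) <= exp (Rabs om * t)).
    { apply exp_le. apply Rle_trans with (Rabs om * tau).
      apply Rmult_le_compat_r; [lra | apply Rle_abs].
      apply Rmult_le_compat_l; [apply Rabs_pos | lra]. }
    assert (M * exp (om * tau) * norm u <= K * norm u).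
    { unfold K. apply Rmult_le_compat_r. apply norm_ge_0. apply Rmult_le_compat_l; lra. }
    lra. }
  assert (SLip : forall tau, 0 <= tau <= t -> forall x y,
     norm (minus (Shat mu0 tau x) (Shat mu0 tau y)) <= K * norm (minus x y)).
  { intros tau Htau x y. rewrite <- (c_lin _ (Hlin tau (proj1 Htau))). apply Sb; exact Htau. }
  assert (Scont : forall u tau0, 0 <= tau0 <= t -> forall e, 0 < e -> exists de, 0 < de /\
     forall tau, 0 <= tau <= t -> Rabs (tau - tau0) < de ->
       norm (minus (Shat mu0 tau u) (Shat mu0 tau0 u)) < e).
  { intros u tau0 Ht0 e He.
    destruct (Hsc u (e / K) ltac:(apply Rdiv_lt_0_compat; lra)) as [de [Hde Hsc']].
    exists de. split. exact Hde. intros tau Htau Hd.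
    assert (HeK : K * (e / K) = e) by (field; lra).
    destruct (Rle_or_lt tau0 tau) as [Hle0|Hlt0].
    - assert (Eq : Shat mu0 tau u = Shat mu0 tau0 (Shat mu0 (tau - tau0) u)).
      { rewrite <- Hsg by lra. f_equal. ring. }
      rewrite Eq. eapply Rle_lt_trans. apply SLip. exact Ht0.
      rewrite Rabs_pos_eq in Hd by lra.
      specialize (Hsc' (tau - tau0) ltac:(lra)).
      assert (K * norm (minus (Shat mu0 (tau - tau0) u) u) < K * (e / K)) by (apply Rmult_lt_compat_l; [lra | exact Hsc']).
      lra.
    - assert (Eq : Shat mu0 tau0 u = Shat mu0 tau (Shat mu0 (tau0 - tau) u)).
      { rewrite <- Hsg by lra. f_equal. ring. }
      rewrite Eq. eapply Rle_lt_trans. apply SLip. exact Htau.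
      rewrite Rabs_left in Hd by lra.
      specialize (Hsc' (tau0 - tau) ltac:(lra)). rewrite c_sym.
      assert (K * norm (minus (Shat mu0 (tau0 - tau) u) u) < K * (e / K)) by (apply Rmult_lt_compat_l; [lra | exact Hsc']).
      lra. }
  set (f := fun s => Shat mu0 (t - s) (w s)).
  assert (fcont : forall y, 0 <= y <= t -> forall e, 0 < e -> exists de, 0 < de /\
     forall x, 0 <= x <= t -> Rabs (x - y) < de -> norm (minus (f x) (f y)) < e).
  { intros y Hy e He.
    destruct (Hw y Hy (e / (2 * K)) ltac:(apply Rdiv_lt_0_compat; lra)) as [d1 [Hd1 Hw1]].
    destruct (Scont (w y) (t - y) ltac:(lra) (e/2) ltac:(lra)) as [d2 [Hd2 Hs2]].
    exists (Rmin d1 d2). split. apply Rmin_pos; assumption.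
    intros x Hx Hxy. unfold f.
    eapply Rle_lt_trans. apply (c_tri _ (Shat mu0 (t - x) (w y))).
    assert (A1 : norm (minus (Shat mu0 (t - x) (w x)) (Shat mu0 (t - x) (w y))) < e / 2).
    { eapply Rle_lt_trans. apply SLip. lra.
      assert (norm (minus (w x) (w y)) < e / (2 * K)) by (apply Hw1; [exact Hx | apply Rlt_le_trans with (1 := Hxy); apply Rmin_l]).
      assert (K * norm (minus (w x) (w y)) < K * (e / (2 * K))) by (apply Rmult_lt_compat_l; lra).
      replace (K * (e / (2 * K))) with (e / 2) in H1 by (field; lra). exact H1. }
    assert (A2 : norm (minus (Shat mu0 (t - x) (w y)) (Shat mu0 (t - y) (w y))) < e / 2).
    { apply Hs2. lra. replace (t - x - (t - y)) with (- (x - y)) by ring. rewrite Rabs_Ropp.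
      apply Rlt_le_trans with (1 := Hxy); apply Rmin_r. }
    lra. }
  assert (funif : forall e, 0 < e -> exists de, 0 < de /\
     forall x y, 0 <= x <= t -> 0 <= y <= t -> Rabs (x - y) < de -> norm (minus (f x) (f y)) < e).
  { intros e He.
    destruct (cover 0 t (fun y dl => forall x, 0 <= x <= t -> Rabs (x - y) < 2 * dl ->
       norm (minus (f x) (f y)) < e / 2)) as [dc [Hdc Hc]].
    { intros y Hy. destruct (fcont y Hy (e/2) ltac:(lra)) as [d1 [Hd1 H1]].
      exists (d1 / 2). split. lra. intros x Hx Hxy. apply H1. exact Hx. lra. }
    exists dc. split. exact Hdc. intros x x' Hx Hx' Hxx.
    destruct (Hc x Hx) as [y [dl [Hy [Q [Hxy Hdl]]]]].
    eapply Rle_lt_trans. apply (c_tri _ (f y)).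
    rewrite (c_sym (f y)).
    assert (norm (minus (f x) (f y)) < e / 2) by (apply Q; [exact Hx | lra]).
    assert (norm (minus (f x') (f y)) < e / 2).
    { apply Q. exact Hx'. replace (x' - y) with ((x' - x) + (x - y)) by ring.
      eapply Rle_lt_trans. apply Rabs_triang. rewrite <- Rabs_Ropp, Ropp_minus_distr. lra. }
    lra. }
  set (F := fun s => f (clamp t s)).
  assert (FU : forall e, 0 < e -> exists de, 0 < de /\
     forall x y, Rabs (x - y) < de -> norm (minus (F x) (F y)) < e).
  { intros e He. destruct (funif e He) as [de [Hde H1]]. exists de. split. exact Hde.
    intros x y Hxy. apply H1. apply clamp_in; lra. apply clamp_in; lra.
    eapply Rle_lt_trans. apply clamp_lip. lra. exact Hxy. }
  assert (Fc : forall z, continuous F z) by (apply uc_cont; exact FU).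
  assert (U2 : forall e, 0 < e -> exists dd, 0 < dd /\ forall l nu, 0 < l < dd -> d nu mu0 < dd ->
     forall x, 0 <= x <= t -> forall tau s, 0 <= s <= tau -> tau <= t ->
       norm (minus (Rfam nu l tau s (w x)) (Shat mu0 (tau - s) (w x))) < e).
  { intros e He.
    destruct (cover 0 t (fun y dl => exists d1, dl <= d1 /\
      (forall l v nu, 0 < l < d1 -> norm (minus v (w y)) < d1 -> d nu mu0 < d1 ->
         forall tau s, 0 <= s <= tau -> tau <= t ->
         norm (minus (Rfam nu l tau s v) (Shat mu0 (tau - s) (w y))) < e / 2) /\
      (forall x, 0 <= x <= t -> Rabs (x - y) < dl -> norm (minus (w x) (w y)) < Rmin d1 (e / (2 * K)))))
      as [dc [Hdc Hc]].
    { intros y Hy. destruct (H5 t mu0 (w y) (e/2) ltac:(lra)) as [d1 [Hd1 H51]].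
      assert (Hm : 0 < Rmin d1 (e / (2 * K))) by (apply Rmin_pos; [lra | apply Rdiv_lt_0_compat; lra]).
      destruct (Hw y Hy _ Hm) as [d2 [Hd2 Hw2]].
      exists (Rmin d1 d2). split. apply Rmin_pos; assumption.
      exists d1. split. apply Rmin_l. split.
      - intros l v nu Hl Hv Hnu tau s0 Hs Htau. apply H51; assumption.
      - intros x Hx Hxy. apply Hw2. exact Hx. apply Rlt_le_trans with (1 := Hxy). apply Rmin_r. }
    exists dc. split. exact Hdc.
    intros l nu Hl Hnu x Hx tau s0 Hs Htau.
    destruct (Hc x Hx) as [y [dl [Hy [[d1 [Hdl1 [Q1 Q2]]] [Hxy Hdl]]]]].
    assert (Hwx : norm (minus (w x) (w y)) < Rmin d1 (e / (2 * K))) by (apply Q2; assumption).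
    pose proof (Rmin_l d1 (e / (2 * K))). pose proof (Rmin_r d1 (e / (2 * K))).
    eapply Rle_lt_trans. apply (c_tri _ (Shat mu0 (tau - s0) (w y))).
    assert (norm (minus (Rfam nu l tau s0 (w x)) (Shat mu0 (tau - s0) (w y))) < e / 2).
    { apply Q1; try lra; try assumption. }
    assert (norm (minus (Shat mu0 (tau - s0) (w y)) (Shat mu0 (tau - s0) (w x))) < e / 2).
    { eapply Rle_lt_trans. apply SLip. lra. rewrite c_sym.
      assert (K * norm (minus (w x) (w y)) < K * (e / (2 * K))) by (apply Rmult_lt_compat_l; lra).
      replace (K * (e / (2 * K))) with (e / 2) in H3 by (field; lra). exact H3. }
    lra. }
  assert (U3 : forall e, 0 < e -> exists dd, 0 < dd /\ forall ee, 0 <= ee < dd -> ee <= t ->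
     forall x, 0 <= x <= t -> norm (minus (Shat mu0 ee (w x)) (w x)) < e).
  { intros e He.
    destruct (cover 0 t (fun y dl =>
      (forall ee, 0 <= ee < dl -> norm (minus (Shat mu0 ee (w y)) (w y)) < e / 3) /\
      (forall x, 0 <= x <= t -> Rabs (x - y) < dl -> norm (minus (w x) (w y)) < e / (3 * K))))
      as [dc [Hdc Hc]].
    { intros y Hy. destruct (Hsc (w y) (e/3) ltac:(lra)) as [d1 [Hd1 Hs1]].
      destruct (Hw y Hy (e / (3 * K)) ltac:(apply Rdiv_lt_0_compat; lra)) as [d2 [Hd2 Hw2]].
      exists (Rmin d1 d2). split. apply Rmin_pos; assumption. split.
      - intros ee Hee. apply Hs1. pose proof (Rmin_l d1 d2). lra.
      - intros x Hx Hxy. apply Hw2. exact Hx. apply Rlt_le_trans with (1 := Hxy). apply Rmin_r. }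
    exists dc. split. exact Hdc.
    intros ee Hee Heet x Hx.
    destruct (Hc x Hx) as [y [dl [Hy [[Q1 Q2] [Hxy Hdl]]]]].
    assert (Hwx : norm (minus (w x) (w y)) < e / (3 * K)) by (apply Q2; assumption).
    eapply Rle_lt_trans. apply (c_tri _ (Shat mu0 ee (w y))).
    eapply Rle_lt_trans. apply Rplus_le_compat_l. apply (c_tri _ (w y)).
    assert (norm (minus (Shat mu0 ee (w y)) (w y)) < e / 3) by (apply Q1; lra).
    assert (norm (minus (Shat mu0 ee (w x)) (Shat mu0 ee (w y))) < e / 3).
    { eapply Rle_lt_trans. apply SLip. lra.
      assert (K * norm (minus (w x) (w y)) < K * (e / (3 * K))) by (apply Rmult_lt_compat_l; lra).
      replace (K * (e / (3 * K))) with (e / 3) in H1 by (field; lra). exact H1. }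
    assert (e / (3 * K) <= e / 3).
    { unfold Rdiv. apply Rmult_le_compat_l. lra. apply Rinv_le_contravar; lra. }
    rewrite (c_sym (w y)). lra. }
  assert (HI : RInt f 0 t = RInt F 0 t).
  { apply RInt_ext. intros x Hx. rewrite Rmin_left, Rmax_right in Hx by lra.
    unfold F. rewrite clamp_id by lra. reflexivity. }
  rewrite HI.
  apply filterlim_locally. intros eps.
  set (ep := pos eps). assert (Hep : 0 < ep) by apply cond_pos.
  set (e1 := ep / (4 * (t + 1))).
  assert (He1 : 0 < e1) by (unfold e1; apply Rdiv_lt_0_compat; lra).
  assert (He1' : (t + 1) * e1 = ep / 4) by (unfold e1; field; lra).
  set (e3 := ep / (4 * K * (t + 1))).
  assert (He3 : 0 < e3) by (unfold e3; apply Rdiv_lt_0_compat; [lra | apply Rmult_lt_0_compat; lra]).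
  assert (He3' : (t + 1) * (K * e3) = ep / 4) by (unfold e3; field; lra).
  destruct (U2 e1 He1) as [d2 [Hd2 U2']].
  destruct (U3 e3 He3) as [d3 [Hd3 U3']].
  destruct (FU e1 He1) as [d4 [Hd4 FU4]].
  destruct (FU 1 Rlt_0_1) as [d5 [Hd5 FU5]].
  set (NF := norm (F t)).
  assert (HNF : 0 <= NF) by apply norm_ge_0.
  set (d6 := ep / (4 * (NF + 1))).
  assert (Hd6 : 0 < d6) by (unfold d6; apply Rdiv_lt_0_compat; lra).
  assert (Hd6' : d6 * (NF + 1) = ep / 4) by (unfold d6; field; lra).
  set (dT := Rmin d3 (Rmin d5 d6)).
  assert (HdT : 0 < dT) by (unfold dT; repeat apply Rmin_pos; lra).
  apply is_lim_seq_spec in Hlamlim. destruct (Hlamlim (mkposreal d2 Hd2)) as [N1 E1].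
  apply is_lim_seq_spec in Hmu. destruct (Hmu (mkposreal d2 Hd2)) as [N2 E2].
  destruct Hle as [N3 E3].
  apply is_lim_seq_spec in Hprod. destruct (Hprod (mkposreal dT HdT)) as [N4 E4].
  destruct (Hprod (mkposreal 1 Rlt_0_1)) as [N5 E5].
  apply is_lim_seq_spec in Hklim. destruct (Hklim ((t + 1) / d4)) as [N6 E6].
  exists (N1 + N2 + N3 + N4 + N5 + N6)%nat. intros n Hn.
  specialize (E1 n ltac:(lia)). specialize (E2 n ltac:(lia)). specialize (E3 n ltac:(lia)).
  specialize (E4 n ltac:(lia)). specialize (E5 n ltac:(lia)). specialize (E6 n ltac:(lia)).
  simpl in E1, E2, E4, E5.
  rewrite Rminus_0_r in E1, E2.
  assert (F1 : lam n < d2) by (eapply Rle_lt_trans; [apply Rle_abs | exact E1]).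
  assert (F2 : d (mu n) mu0 < d2) by (eapply Rle_lt_trans; [apply Rle_abs | exact E2]).
  clear E1 E2.
  pose proof (Hlam n) as Hln. pose proof (HT n) as HTn. pose proof (Hk n) as Hkn.
  set (h := lam n * T n). assert (Hh : 0 < h) by (unfold h; apply Rmult_lt_0_compat; lra).
  set (tn := INR (k n) * lam n * T n).
  assert (Htn : tn = INR (k n) * h) by (unfold tn, h; ring).
  assert (Hk1 : 1 <= INR (k n)) by (apply (le_INR 1); exact Hkn).
  assert (Htn0 : h <= tn) by (rewrite Htn; nra).
  fold tn in E3, E4, E5.
  apply Rabs_lt_between in E4. apply Rabs_lt_between in E5.
  pose proof (Rmin_l d3 (Rmin d5 d6)). pose proof (Rmin_r d3 (Rmin d5 d6)).
  pose proof (Rmin_l d5 d6). pose proof (Rmin_r d5 d6). fold dT in H, H1.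
  assert (Hhd4 : h < d4).
  { assert ((t + 1) / d4 * d4 = t + 1) by (field; lra).
    assert (INR (k n) * h < INR (k n) * d4) by nra.
    nra. }
  set (m := (k n - 1)%nat).
  assert (HSm : INR (S m) = INR (k n)) by (f_equal; unfold m; lia).
  assert (Hj : forall j, (j <= m)%nat -> 0 <= INR j * lam n * T n /\ INR j * lam n * T n <= tn - h
            /\ INR j * lam n * T n = INR j * h).
  { intros j Hjm. assert (INR j <= INR (k n) - 1).
    { rewrite <- HSm, S_INR. pose proof (le_INR _ _ Hjm). lra. }
    pose proof (pos_INR j). assert (Ej : INR j * lam n * T n = INR j * h) by (unfold h; ring).
    rewrite Ej, Htn. split; [|split]; nra. }
  assert (Htt : tn <= t) by exact E3.
  apply (@norm_compat1 R_AbsRing (CompleteNormedModule.NormedModule R_AbsRing E)).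
  set (B := fun j => Shat mu0 (tn - INR j * lam n * T n) (w (INR j * lam n * T n))).
  set (C := fun j => F (INR j * h)).
  eapply Rle_lt_trans. apply (c_tri _ (scal h (sum_n B m))).
  eapply Rle_lt_trans. apply Rplus_le_compat_l. apply (c_tri _ (scal h (sum_n C m))).
  eapply Rle_lt_trans. apply Rplus_le_compat_l. apply Rplus_le_compat_l.
    apply (c_tri _ (RInt F 0 tn)).
  assert (T4 : norm (minus (RInt F 0 tn) (RInt F 0 t)) < ep / 4).
  { rewrite <- (RInt_Chasles F 0 tn t) by (apply ex_RInt_continuous; intros; apply Fc).
    rewrite c_minus_plus.
    apply Rle_lt_trans with ((t - tn) * (NF + 1)).
    - apply norm_RInt_le_const with (f := F). lra.
      + intros x Hx. pose proof (c_inv2 (F x) (F t)).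
        assert (norm (minus (F x) (F t)) < 1).
        { apply FU5. rewrite Rabs_left1 by lra. lra. }
        fold NF in H4. lra.
      + apply RInt_correct, ex_RInt_continuous. intros; apply Fc.
    - assert (t - tn < d6) by lra.
      assert ((t - tn) * (NF + 1) < d6 * (NF + 1)) by (apply Rmult_lt_compat_r; lra).
      lra. }
  assert (T3 : norm (minus (scal h (sum_n C m)) (RInt F 0 tn)) < ep / 4).
  { eapply Rle_lt_trans; [right; apply c_sym |]. rewrite Htn, <- HSm.
    apply Rle_lt_trans with (INR (S m) * h * e1).
    - apply riemann. lra. exact Fc. intros x y Hxy. left. apply FU4. lra.
    - rewrite HSm, <- Htn.
      assert (tn * e1 <= t * e1) by (apply Rmult_le_compat_r; lra). lra. }
  assert (T2 : norm (minus (scal h (sum_n B m)) (scal h (sum_n C m))) < ep / 4).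
  { eapply Rle_lt_trans. apply c_scal_diff. lra.
    eapply Rle_lt_trans. apply Rmult_le_compat_l. lra. apply c_diff.
    eapply Rle_lt_trans. apply Rmult_le_compat_l. lra. apply sumR_bound with (c := K * e3).
    - intros j Hjm. destruct (Hj j Hjm) as [Hj0 [Hj1 Hj2]].
      unfold B, C, F, f. cbv beta. rewrite Hj2 in *. rewrite clamp_id by lra.
      assert (Eq : Shat mu0 (t - INR j * h) (w (INR j * h)) =
                   Shat mu0 (tn - INR j * h) (Shat mu0 (t - tn) (w (INR j * h)))).
      { rewrite <- Hsg by lra. f_equal. ring. }
      rewrite Eq. eapply Rle_trans. apply SLip. lra. rewrite c_sym.
      apply Rmult_le_compat_l. lra. left. apply U3'. lra. lra. lra.
    - rewrite HSm. replace (h * (INR (k n) * (K * e3))) with (tn * (K * e3)) by (rewrite Htn; ring).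
      assert (tn * (K * e3) <= t * (K * e3)) by (apply Rmult_le_compat_r; [apply Rmult_le_pos; lra | lra]). assert (0 < K * e3) by (apply Rmult_lt_0_compat; lra). lra. }
  match goal with |- norm (minus ?S _) + _ < _ =>
    assert (T1 : norm (minus S (scal h (sum_n B m))) < ep / 4) end.
  { eapply Rle_lt_trans. apply c_scal_diff. lra.
    eapply Rle_lt_trans. apply Rmult_le_compat_l. lra. apply c_diff.
    eapply Rle_lt_trans. apply Rmult_le_compat_l. lra. apply sumR_bound with (c := e1).
    - intros j Hjm. destruct (Hj j Hjm) as [Hj0 [Hj1 Hj2]].
      unfold B. cbv beta. left. apply U2'; lra.
    - rewrite HSm. replace (h * (INR (k n) * e1)) with (tn * e1) by (rewrite Htn; ring).
      assert (tn * e1 <= t * e1) by (apply Rmult_le_compat_r; lra). lra. }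
  eapply Rlt_le_trans; [apply Rplus_lt_compat; [exact T1 | apply Rplus_lt_compat; [exact T2 | apply Rplus_lt_compat; [exact T3 | exact T4]]] | lra].
Qed.
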